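(* Let $p=2$ and assume $\mu^1,\dots,\mu^N$ are not all equal. Let $\tilde\nu=\sum_{i=1}^N\lambda_i\sum_{k=1}^{n_i}\mu^i_k\delta(m^i_k)$ be the output of the pairwise algorithm, where $$m^i_k=\sum_{j=1}^N\lambda_j\sum_{l=1}^{n_j}\frac{\pi^{ij}_{k,l}}{\mu^i_k}x^j_l.$$ Then for any optimal barycenter $\hat\nu$ (minimizer of $\Psi_2$), $$\frac{\Psi_2(\tilde\nu)}{\Psi_2(\hat\nu)}\le2-\frac{\sum_{i=1}^N\lambda_i\sum_{k=1}^{n_i}\mu^i_k\|m^i_k-x^i_k\|^2}{\sum_{1\le i<j\le N}\lambda_i\lambda_j\mathcal{W}_2^2(\mu^i,\mu^j)}.$$
   Context: $\|\cdot\|$ is the Euclidean norm on $\mathbb{R}^d$. For finitely supported probability measures $\mu,\nu$ on $\mathbb{R}^d$, $\mathcal{W}_2^2(\mu,\nu)\coloneqq\min_{\pi\in\Pi(\mu,\nu)}\int\|x-y\|^2\,d\pi$, with $\Pi(\mu,\nu)$ the set of couplings. Fix $N\ge2$, $\lambda\in\Delta_N\coloneqq\{\lambda\in(0,1)^N:\sum_i\lambda_i=1\}$, and discrete probability measures $\mu^i=\sum_{l=1}^{n_i}\mu^i_l\delta(x^i_l)$, $i=1,\dots,N$, with positive weights and pairwise distinct points for each $i$. $\Psi_2(\nu)\coloneqq\sum_{i=1}^N\lambda_i\mathcal{W}_2^2(\nu,\mu^i)$. Plans of the pairwise algorithm: $\pi^{ii}\coloneqq\sum_k\mu^i_k\delta(x^i_k,x^i_k)$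 (so $\pi^{ii}_{k,l}=\mu^i_k$ if $l=k$, else $0$); for $i<j$, $\pi^{ij}=\sum_{k,l}\pi^{ij}_{k,l}\delta(x^i_k,x^j_l)\in\Pi(\mu^i,\mu^j)$ is an optimal plan for the cost $\|x-y\|^2$; and $\pi^{ji}_{l,k}\coloneqq\pi^{ij}_{k,l}$. *)

(* Defs.v *)
From HB Require Import structures.
From mathcomp Require Import all_boot all_order all_algebra.
From mathcomp Require Import classical_sets reals.
Set Implicit Arguments. Unset Strict Implicit. Unset Printing Implicit Defensive.
Import Order.TTheory GRing.Theory Num.Theory.
Local Open Scope ring_scope.
Local Open Scope classical_set_scope.

(* A finitely supported measure on R^d is given by atoms indexed by a finite
   type I: weights w : I -> R at points x : I -> 'rV[R]_d
   (the measure is \sum_k w k delta(x k); points may repeat). *)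

Definition sqdist {R : realType} {d : nat} (a b : 'rV[R]_d) : R :=
  \sum_(t < d) (a 0 t - b 0 t) ^+ 2.

Definition is_prob {R : realType} {I : finType} (w : I -> R) : Prop :=
  (forall k, 0 <= w k) /\ \sum_k w k = 1.

Definition is_coupling {R : realType} {I J : finType}
  (w : I -> R) (v : J -> R) (pi : I -> J -> R) : Prop :=
  (forall k l, 0 <= pi k l) /\
  (forall k, \sum_l pi k l = w k) /\ (forall l, \sum_k pi k l = v l).

Definition tcost {R : realType} {d : nat} {I J : finType}
  (x : I -> 'rV[R]_d) (y : J -> 'rV[R]_d) (pi : I -> J -> R) : R :=
  \sum_k \sum_l pi k l * sqdist (x k) (y l).

(* W_2^2 : minimal transport cost over couplings (written as an infimum;
   the minimum is attained for finitely supported measures). *)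
Definition W2sq {R : realType} {d : nat} {I J : finType}
  (w : I -> R) (x : I -> 'rV[R]_d) (v : J -> R) (y : J -> 'rV[R]_d) : R :=
  inf [set c | exists pi, is_coupling w v pi /\ c = tcost x y pi].

Definition mass {R : realType} {d : nat} {I : finType}
  (w : I -> R) (x : I -> 'rV[R]_d) (y : 'rV[R]_d) : R :=
  \sum_(k | x k == y) w k.

Definition Psi2 {R : realType} {d N : nat} (lam : 'I_N -> R)
  (n : 'I_N -> nat) (mu : forall i, 'I_(n i) -> R)
  (x : forall i, 'I_(n i) -> 'rV[R]_d)
  {J : finType} (v : J -> R) (y : J -> 'rV[R]_d) : R :=
  \sum_(i < N) lam i * W2sq v y (mu i) (x i).

(* Main.v *)
Require Import Defs.
From HB Require Import structures.
From mathcomp Require Import all_boot all_order all_algebra.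
From mathcomp Require Import classical_sets reals.
From mathcomp Require Import boolp ring lra.
Import Order.TTheory GRing.Theory Num.Theory.
Local Open Scope ring_scope.


Section Helpers.
Context {R : realType}.
Context {d : nat}.
Implicit Types a b : 'rV[R]_d.

Lemma sqdist_ge0 a b : 0 <= sqdist a b.
Proof. by apply: sumr_ge0 => t _; rewrite sqr_ge0. Qed.

Lemma sqdistC a b : sqdist a b = sqdist b a.
Proof. by apply: eq_bigr => t _; rewrite -sqrrN opprB. Qed.

Lemma sqdist_xx a : sqdist a a = 0.
Proof. by rewrite /sqdist big1 // => t _; rewrite subrr expr0n. Qed.

Lemma tcost_ge0 (I J : finType) (w : I -> R) (v : J -> R) (g : I -> J -> R)
  (x : I -> 'rV[R]_d) (y : J -> 'rV[R]_d) :
  is_coupling w v g -> 0 <= tcost x y g.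
Proof.
move=> [g0 _]; apply: sumr_ge0 => k _; apply: sumr_ge0 => l _.
by rewrite mulr_ge0 ?sqdist_ge0.
Qed.

Lemma W2sq_le (I J : finType) (w : I -> R) (v : J -> R) (g : I -> J -> R)
  (x : I -> 'rV[R]_d) (y : J -> 'rV[R]_d) :
  is_coupling w v g -> W2sq w x v y <= tcost x y g.
Proof.
move=> Hg; rewrite /W2sq; apply: ge_inf; last by exists g.
exists 0 => c [g' [Hg' ->]]; exact: tcost_ge0 Hg'.
Qed.

Lemma W2sq_ge0 (I J : finType) (w : I -> R) (v : J -> R) (g : I -> J -> R)
  (x : I -> 'rV[R]_d) (y : J -> 'rV[R]_d) :
  is_coupling w v g -> 0 <= W2sq w x v y.
Proof.
move=> Hg; rewrite /W2sq; apply: lb_le_inf; first by exists (tcost x y g); exists g.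
move=> c [g' [Hg' ->]]; exact: tcost_ge0 Hg'.
Qed.

Lemma W2sq_approx (I J : finType) (w : I -> R) (v : J -> R) (g : I -> J -> R)
  (x : I -> 'rV[R]_d) (y : J -> 'rV[R]_d) (e : R) :
  is_coupling w v g -> 0 < e ->
  exists g', is_coupling w v g' /\ tcost x y g' <= W2sq w x v y + e.
Proof.
move=> Hg e0.
have Hinf : has_inf [set c | exists pi, is_coupling w v pi /\ c = tcost x y pi].
  split; first by exists (tcost x y g); exists g.
  exists 0 => c [g' [Hg' ->]]; exact: tcost_ge0 Hg'.
have [c [g' [Hg' ->]] lt] := inf_adherent e0 Hinf.
by exists g'; split => //; apply: ltW.
Qed.

Lemma sum_sig (I : finType) (Jt : I -> finType) (G : {i : I & Jt i} -> R) :
  \sum_p G p = \sum_i \sum_(k : Jt i) G (Tagged Jt k).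
Proof.
have := @sig_big_dep R 0 +%R I Jt xpredT (fun _ => xpredT)
  (fun i (k : Jt i) => G (Tagged Jt k)).
move=> ->; by apply: eq_bigr => -[i k].
Qed.

Lemma prod_sums (I J : finType) (f : I -> R) (h : J -> R) :
  \sum_k \sum_l f k * h l = (\sum_k f k) * (\sum_l h l).
Proof. by rewrite mulr_suml; apply: eq_bigr => k _; rewrite mulr_sumr. Qed.

Lemma split_sum (N : nat) (f : 'I_N -> 'I_N -> R) :
  \sum_(i < N) \sum_(j < N) f i j = \sum_(i < N) \sum_(j < N | (i < j)%N) f i j
     + \sum_(i < N) f i i + \sum_(i < N) \sum_(j < N | (i < j)%N) f j i.
Proof.
have E : forall i : 'I_N, \sum_(j < N) f i j = \sum_(j < N | (i < j)%N) f i j + f i i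
     + \sum_(j < N | (j < i)%N) f i j.
  move=> i; rewrite (bigID (fun j : 'I_N => (i < j)%N)) /= -addrA; congr (_ + _).
  rewrite (bigD1 i) /= ?ltnn //; congr (_ + _); apply: eq_bigl => j.
  by rewrite -leqNgt ltn_neqAle andbC.
rewrite (eq_bigr _ (fun i _ => E i)) !big_split /=; congr (_ + _).
by rewrite (exchange_big_dep xpredT) //=.
Qed.

End Helpers.
Arguments tcost_ge0 {R d I J w v g} x y.
Arguments W2sq_le {R d I J w v g} x y.
Arguments W2sq_ge0 {R d I J w v g} x y.
Arguments W2sq_approx {R d I J w v g} x y.


Section Helpers2.
Context {R : realType}.
Context {d : nat}.

Lemma var_id (I : finType) (c : I -> R) (z : I -> 'rV[R]_d) (M : R) (mm a : 'rV[R]_d) :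
  M = \sum_q c q -> (forall t, M * mm 0 t = \sum_q c q * z q 0 t) ->
  \sum_q c q * sqdist mm (z q) = \sum_q c q * sqdist a (z q) - M * sqdist mm a.
Proof.
move=> HM Hm; rewrite /sqdist.
have ex : forall u : I -> 'I_d -> R,
    \sum_q c q * \sum_(t < d) u q t = \sum_(t < d) \sum_q c q * u q t.
  by move=> u; rewrite (exchange_big); apply: eq_bigr => q _; rewrite mulr_sumr.
rewrite !ex mulr_sumr -sumrB; apply: eq_bigr => t _.
set m := mm 0 t; set b := a 0 t.
transitivity (\sum_q (c q * (b - z q 0 t)^+2 - c q * (b - m)^+2
    - 2 * (b - m) * (c q * m - c q * z q 0 t))).
  by apply: eq_bigr => q _; ring.
rewrite !sumrB -mulr_sumr sumrB -!mulr_suml -HM -Hm.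
by rewrite -/m subrr mulr0 subr0 -sqrrN opprB.
Qed.

End Helpers2.


Section Helpers3.
Context {R : realType}.



Lemma sum3 (I J : finType) (A B C : I -> J -> R) :
  \sum_k \sum_l (A k l + B k l - C k l) =
  \sum_k \sum_l A k l + \sum_k \sum_l B k l - \sum_k \sum_l C k l.
Proof.
rewrite -!big_split -sumrB /=; apply: eq_bigr => k _.
by rewrite -!big_split -sumrB.
Qed.

Lemma glue_pt (N : nat) (n : 'I_N -> nat) (lam : 'I_N -> R)
  (g : forall i, 'I_(n i) -> R) (a : forall i, 'I_(n i) -> R) (b nu : R) :
  (forall i, 0 <= lam i) -> \sum_i lam i = 1 -> (forall i k, 0 <= g i k) ->
  (forall i, \sum_k g i k = nu) ->
  \sum_i \sum_j lam i * lam j * \sum_k \sum_l (g i k * g j l / nu * (a i k - a j l)^+2)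
  <= 2 * \sum_i lam i * \sum_k g i k * (b - a i k)^+2.
Proof.
move=> l0 l1 g0 gnu.
have rhs0 : 0 <= 2 * \sum_i lam i * \sum_k g i k * (b - a i k)^+2.
  rewrite mulr_ge0 // sumr_ge0 // => i _; rewrite mulr_ge0 // sumr_ge0 // => k _.
  by rewrite mulr_ge0 // sqr_ge0.
have [nu0|nupos] := eqVneq nu 0.
  rewrite big1 // => i _; rewrite big1 // => j _.
  by rewrite big1 ?mulr0 // => k _; rewrite big1 // => l _; rewrite nu0 invr0 !mulr0 mul0r.
pose S i := \sum_k g i k * (a i k - b)^+2.
pose V i := \sum_k g i k * (a i k - b).
have E1 : forall i j, \sum_k \sum_l (g i k * g j l / nu * (a i k - a j l)^+2)
    = nu^-1 * (S i * nu + nu * S j - 2 * V i * V j).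
  move=> i j.
  transitivity (nu^-1 * \sum_k \sum_l (g i k * (a i k - b)^+2 * g j l
      + g i k * (g j l * (a j l - b)^+2) - (2 * (g i k * (a i k - b))) * (g j l * (a j l - b)))).
    rewrite mulr_sumr; apply: eq_bigr => k _; rewrite mulr_sumr; apply: eq_bigr => l _.
    by rewrite /=; ring.
  by rewrite sum3 !prod_sums !gnu -mulr_sumr.
have E2 : \sum_i \sum_j lam i * lam j * \sum_k \sum_l (g i k * g j l / nu * (a i k - a j l)^+2)
   = nu^-1 * (2 * nu * \sum_i lam i * S i - 2 * (\sum_i lam i * V i)^+2).
  transitivity (nu^-1 * \sum_i \sum_j (nu * (lam i * S i) * lam j
      + lam i * (nu * (lam j * S j)) - (2 * (lam i * V i)) * (lam j * V j))).
    rewrite mulr_sumr; apply: eq_bigr => i _; rewrite mulr_sumr; apply: eq_bigr => j _.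
    by rewrite E1; ring.
  rewrite sum3 !prod_sums l1 -!mulr_sumr; congr (_ * _); ring.
rewrite E2.
have -> : \sum_i lam i * \sum_k g i k * (b - a i k)^+2 = \sum_i lam i * S i.
  apply: eq_bigr => i _; congr (_ * _); apply: eq_bigr => k _.
  by rewrite -sqrrN opprB.
have nup : 0 < nu.
  rewrite lt_neqAle eq_sym nupos /=.
  have [i _] : exists i : 'I_N, true.
    case: N lam l1 {E2 E1 S V rhs0 l0 g a g0 gnu n} => [|N'] lam l1.
      by move: l1; rewrite big_ord0 => /eqP; rewrite eq_sym oner_eq0.
    by exists ord0.
  by rewrite -(gnu i) sumr_ge0.
set X := \sum_i lam i * S i; set Y := \sum_i lam i * V i.
have -> : nu^-1 * (2 * nu * X - 2 * Y ^+ 2) = 2 * X - 2 * (nu^-1 * Y ^+ 2).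
  by field.
have : 0 <= nu^-1 * Y ^+ 2 by apply: mulr_ge0; [rewrite invr_ge0 ltW | rewrite sqr_ge0].
lra.
Qed.

End Helpers3.


Section Helpers4.
Context {R : realType}.
Context {d : nat}.

Lemma swap2 (A1 A2 B1 B2 : finType) (F : A1 -> A2 -> B1 -> B2 -> R) :
  \sum_a \sum_b \sum_c \sum_e F a b c e = \sum_c \sum_e \sum_a \sum_b F a b c e.
Proof.
under eq_bigr => a _ do (rewrite exchange_big; under eq_bigr => c _ do rewrite exchange_big).
rewrite exchange_big; apply: eq_bigr => c _.
by rewrite exchange_big.
Qed.

Lemma rho_coupling (J : finType) (nuw : J -> R) (I1 I2 : finType)
  (w1 : I1 -> R) (w2 : I2 -> R) (g1 : J -> I1 -> R) (g2 : J -> I2 -> R) :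
  is_coupling nuw w1 g1 -> is_coupling nuw w2 g2 ->
  is_coupling w1 w2 (fun k l => \sum_y g1 y k * g2 y l / nuw y).
Proof.
move=> [p1 [r1 c1]] [p2 [r2 c2]].
have nu0 : forall y, 0 <= nuw y by move=> y; rewrite -r1 sumr_ge0.
have key : forall (I : finType) (g : J -> I -> R) (y : J) (k : I),
    (forall y k, 0 <= g y k) -> (forall y, \sum_k g y k = nuw y) ->
    g y k / nuw y * nuw y = g y k.
  move=> I g y k gp gr.
  have [z|nz] := eqVneq (nuw y) 0; last by rewrite divfK.
  rewrite z mulr0; apply/esym.
  have /psumr_eq0P H : \sum_k g y k = 0 by rewrite gr.
  by apply: H => // k' _.
split; [|split].
- move=> k l; apply: sumr_ge0 => y _.
  by rewrite mulr_ge0 ?invr_ge0 ?mulr_ge0.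
- move=> k; rewrite exchange_big -c1; apply: eq_bigr => y _.
  under eq_bigr => l _ do rewrite mulrAC.
  by rewrite -mulr_sumr r2 (key _ g1).
- move=> l; rewrite exchange_big -c2; apply: eq_bigr => y _.
  under eq_bigr => k _ do rewrite [g1 y k * _]mulrC mulrAC.
  by rewrite -mulr_sumr r1 (key _ g2).
Qed.

Lemma glue_bound (N : nat) (n : 'I_N -> nat) (lam : 'I_N -> R)
  (mu : forall i, 'I_(n i) -> R) (x : forall i, 'I_(n i) -> 'rV[R]_d)
  (J : finType) (nuw : J -> R) (nux : J -> 'rV[R]_d)
  (gam : forall i, J -> 'I_(n i) -> R) :
  (forall i, 0 <= lam i) -> \sum_i lam i = 1 ->
  (forall i, is_coupling nuw (mu i) (gam i)) ->
  \sum_(i < N) \sum_(j < N | (i < j)%N) lam i * lam j * W2sq (mu i) (x i) (mu j) (x j)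
  <= \sum_i lam i * tcost nux (x i) (gam i).
Proof.
move=> l0 l1 gc.
pose rho i j := fun k l => \sum_y gam i y k * gam j y l / nuw y.
have rc : forall i j, is_coupling (mu i) (mu j) (rho i j).
  by move=> i j; apply: rho_coupling.
pose D i j := tcost (x i) (x j) (rho i j).
have Dsym : forall i j, D i j = D j i.
  move=> i j; rewrite /D /tcost exchange_big; apply: eq_bigr => l _.
  apply: eq_bigr => k _; rewrite sqdistC; congr (_ * _).
  by apply: eq_bigr => y _; rewrite (mulrC (gam i y k)).
have step1 : \sum_(i < N) \sum_(j < N | (i < j)%N) lam i * lam j * W2sq (mu i) (x i) (mu j) (x j)
    <= \sum_(i < N) \sum_(j < N | (i < j)%N) lam i * lam j * D i j.
  apply: ler_sum => i _; apply: ler_sum => j _.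
  by rewrite ler_wpM2l ?mulr_ge0 // (W2sq_le (x i) (x j) (rc i j)).
have step2 : 2 * \sum_(i < N) \sum_(j < N | (i < j)%N) lam i * lam j * D i j
    <= \sum_(i < N) \sum_(j < N) lam i * lam j * D i j.
  rewrite (@split_sum R N (fun i j => lam i * lam j * D i j)).
  have -> : \sum_(i < N) \sum_(j < N | (i < j)%N) lam j * lam i * D j i =
            \sum_(i < N) \sum_(j < N | (i < j)%N) lam i * lam j * D i j.
    by apply: eq_bigr => i _; apply: eq_bigr => j _; rewrite Dsym [lam j * _]mulrC.
  have : 0 <= \sum_(i < N) lam i * lam i * D i i.
    apply: sumr_ge0 => i _; rewrite mulr_ge0 ?mulr_ge0 //.
    exact: tcost_ge0 (x i) (x i) (rc i i).
  lra.
have step3 : \sum_(i < N) \sum_(j < N) lam i * lam j * D i j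
    <= 2 * \sum_i lam i * tcost nux (x i) (gam i).
  have -> : \sum_(i < N) \sum_(j < N) lam i * lam j * D i j =
     \sum_y \sum_(t < d) \sum_(i < N) \sum_(j < N) lam i * lam j *
        \sum_k \sum_l (gam i y k * gam j y l / nuw y * (x i k 0 t - x j l 0 t)^+2).
    rewrite -swap2; apply: eq_bigr => i _; apply: eq_bigr => j _.
    under eq_bigr => y _ do rewrite -mulr_sumr.
    rewrite -mulr_sumr; congr (_ * _).
    rewrite /D /tcost /sqdist -swap2; apply: eq_bigr => k _; apply: eq_bigr => l _.
    by rewrite prod_sums.
  have -> : 2 * \sum_i lam i * tcost nux (x i) (gam i) =
     \sum_y \sum_(t < d) 2 * \sum_(i < N) lam i * \sum_k gam i y k * (nux y 0 t - x i k 0 t)^+2.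
    under [RHS]eq_bigr => y _ do rewrite -mulr_sumr.
    rewrite -mulr_sumr; congr (_ * _).
    rewrite exchange_big; under [RHS]eq_bigr => y _ do rewrite exchange_big.
    rewrite exchange_big /=; apply: eq_bigr => i _.
    under [RHS]eq_bigr => y _ do rewrite -mulr_sumr.
    rewrite -mulr_sumr; congr (_ * _); rewrite /tcost /sqdist [RHS]exchange_big /=.
    apply: eq_bigr => y _.
    rewrite [RHS]exchange_big; apply: eq_bigr => k _; by rewrite mulr_sumr.
  apply: ler_sum => y _; apply: ler_sum => t _.
  apply: glue_pt => // [i k|i].
    by case: (gc i) => p _; apply: p.
  by case: (gc i) => _ [r _]; apply: r.
lra.
Qed.

End Helpers4.


Theorem mainTheorem7 (R : realType) (d N : nat) (HN : (2 <= N)%N)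
  (lam : 'I_N -> R)
  (Hlam : (forall i, 0 < lam i < 1) /\ \sum_(i < N) lam i = 1)
  (n : 'I_N -> nat) (mu : forall i, 'I_(n i) -> R)
  (x : forall i, 'I_(n i) -> 'rV[R]_d)
  (Hmu : forall i, (forall k, 0 < mu i k) /\ \sum_k mu i k = 1)
  (Hx : forall i, injective (x i))
  (Hneq : exists i j y, mass (mu i) (x i) y <> mass (mu j) (x j) y)
  (pi : forall i j, 'I_(n i) -> 'I_(n j) -> R)
  (Hii : forall i k l, pi i i k l = if k == l then mu i k else 0)
  (Hopt : forall i j : 'I_N, (i < j)%N ->
     is_coupling (mu i) (mu j) (pi i j) /\
     tcost (x i) (x j) (pi i j) = W2sq (mu i) (x i) (mu j) (x j))
  (Hsym : forall (i j : 'I_N) k l, (j < i)%N -> pi i j k l = pi j i l k)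
  (m : forall i, 'I_(n i) -> 'rV[R]_d)
  (Hm : forall i k, m i k =
     \sum_(j < N) lam j *: \sum_(l < n j) (pi i j k l / mu i k) *: x j l)
  (J : finType) (nuw : J -> R) (nux : J -> 'rV[R]_d)
  (Hnu_prob : is_prob nuw)
  (Hnu_opt : forall (J' : finType) (w' : J' -> R) (y' : J' -> 'rV[R]_d),
     is_prob w' -> Psi2 lam mu x nuw nux <= Psi2 lam mu x w' y') :
  let tw := fun p : {i : 'I_N & 'I_(n i)} => lam (tag p) * mu (tag p) (tagged p) in
  let tx := fun p : {i : 'I_N & 'I_(n i)} => m (tag p) (tagged p) in
  Psi2 lam mu x tw tx / Psi2 lam mu x nuw nux <=
  2 - (\sum_(i < N) lam i * \sum_(k < n i) mu i k * sqdist (m i k) (x i k)) /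
      (\sum_(i < N) \sum_(j < N | (i < j)%N) lam i * lam j * W2sq (mu i) (x i) (mu j) (x j)).
Proof.
cbv zeta.
set tw := (fun p : {i : 'I_N & 'I_(n i)} => lam (tag p) * mu (tag p) (tagged p)).
set tx := (fun p : {i : 'I_N & 'I_(n i)} => m (tag p) (tagged p)).
case: Hlam => Hl Hl1.
have lpos : forall i, 0 < lam i by move=> i; case/andP: (Hl i).
have l0 : forall i, 0 <= lam i by move=> i; apply: ltW.
have mupos : forall i k, 0 < mu i k by move=> i k; case: (Hmu i) => h _; apply: h.
have pic : forall i j, is_coupling (mu i) (mu j) (pi i j).
  move=> i j; case: (ltngtP i j) => h.
  - by case: (Hopt i j h).
  - case: (Hopt j i h) => [[p [r c]] _]; split; [|split].
    + by move=> k l; rewrite Hsym.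
    + by move=> k; rewrite -c; apply: eq_bigr => l _; rewrite Hsym.
    + by move=> l; rewrite -r; apply: eq_bigr => k _; rewrite Hsym.
  - have e : i = j by apply: val_inj.
    subst j; split; [|split].
    + by move=> k l; rewrite Hii; case: eqP => _ //; apply: ltW.
    + move=> k; rewrite (bigD1 k) //= Hii eqxx big1 ?addr0 // => l lk.
      by rewrite Hii eq_sym (negbTE lk).
    + move=> l; rewrite (bigD1 l) //= Hii eqxx big1 ?addr0 // => k kl.
      by rewrite Hii (negbTE kl).
pose C i j := tcost (x i) (x j) (pi i j).
set B := \sum_(i < N) \sum_(j < N | (i < j)%N) lam i * lam j * W2sq (mu i) (x i) (mu j) (x j).
set A := \sum_(i < N) lam i * \sum_(k < n i) mu i k * sqdist (m i k) (x i k).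
set P := Psi2 lam mu x tw tx.
set Q := Psi2 lam mu x nuw nux.
pose G j := fun (p : {i : 'I_N & 'I_(n i)}) (l : 'I_(n j)) =>
   lam (tag p) * pi (tag p) j (tagged p) l.
have Gc : forall j, is_coupling tw (mu j) (G j).
  move=> j; split; [|split].
  - by move=> p l; rewrite mulr_ge0 //; case: (pic (tag p) j) => h _; apply: h.
  - by move=> p; rewrite /G -big_distrr /= ((pic (tag p) j).2.1) /tw.
  - move=> l; rewrite sum_sig /G /=.
    under eq_bigr => i _ do rewrite -big_distrr /= ((pic i j).2.2).
    by rewrite -big_distrl /= Hl1 mul1r.
have B0 : 0 <= B.
  apply: sumr_ge0 => i _; apply: sumr_ge0 => j _.
  by rewrite mulr_ge0 ?mulr_ge0 // (W2sq_ge0 (x i) (x j) (pic i j)).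
have A0 : 0 <= A.
  apply: sumr_ge0 => i _; rewrite mulr_ge0 // sumr_ge0 // => k _.
  by rewrite mulr_ge0 ?sqdist_ge0 // ltW.
have P0 : 0 <= P.
  apply: sumr_ge0 => j _; rewrite mulr_ge0 //.
  exact: (W2sq_ge0 tx (x j) (Gc j)).
have HU : P <= 2 * B - A.
  pose c i k (q : {j : 'I_N & 'I_(n j)}) := lam (tag q) * pi i (tag q) k (tagged q).
  pose z (q : {j : 'I_N & 'I_(n j)}) := x (tag q) (tagged q).
  have HU1 : P <= \sum_(j<N) lam j * tcost tx (x j) (G j).
    apply: ler_sum => j _; rewrite ler_wpM2l //; exact: (W2sq_le tx (x j) (Gc j)).
  have HU2 : \sum_(j<N) lam j * tcost tx (x j) (G j) =
     \sum_(i<N) lam i * \sum_(k < n i) \sum_q c i k q * sqdist (m i k) (z q).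
    transitivity (\sum_(i<N) \sum_(j<N) \sum_(k < n i) \sum_(l < n j)
        lam i * (lam j * pi i j k l) * sqdist (m i k) (x j l)).
      under eq_bigr => j _ do rewrite /tcost sum_sig big_distrr /=.
      rewrite exchange_big; apply: eq_bigr => i _; apply: eq_bigr => j _.
      rewrite big_distrr /=; apply: eq_bigr => k _; rewrite big_distrr /=; apply: eq_bigr => l _.
      rewrite /G /tx /=; ring.
    apply: eq_bigr => i _; rewrite big_distrr /=.
    under [RHS]eq_bigr => k _ do rewrite sum_sig big_distrr /=.
    rewrite [RHS]exchange_big; apply: eq_bigr => j _; apply: eq_bigr => k _.
    rewrite big_distrr /=; apply: eq_bigr => l _; by rewrite /c /z /= !mulrA.
  have HU3 : forall i k, \sum_q c i k q * sqdist (m i k) (z q) =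
      \sum_q c i k q * sqdist (x i k) (z q) - mu i k * sqdist (m i k) (x i k).
    move=> i k; apply: var_id.
    - rewrite sum_sig /c /=.
      under eq_bigr => j _ do rewrite -big_distrr /= ((pic i j).2.1).
      by rewrite -big_distrl /= Hl1 mul1r.
    - move=> t; rewrite Hm summxE sum_sig big_distrr /=; apply: eq_bigr => j _.
      rewrite mxE summxE big_distrr /= big_distrr /=; apply: eq_bigr => l _.
      rewrite mxE /c /z /=.
      have mnz : mu i k != 0 by apply: lt0r_neq0.
      set e1 := x j l 0 t; set p1 := pi i j k l.
      by field.
  have HU4 : \sum_(i<N) lam i * \sum_(k < n i) \sum_q c i k q * sqdist (x i k) (z q)
      = \sum_(i<N) \sum_(j<N) lam i * lam j * C i j.
    apply: eq_bigr => i _.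
    rewrite big_distrr /=; under eq_bigr => k _ do rewrite sum_sig big_distrr /=.
    rewrite exchange_big /=; apply: eq_bigr => j _.
    rewrite /C /tcost big_distrr /=; apply: eq_bigr => k _.
    rewrite !big_distrr /=; apply: eq_bigr => l _; rewrite /c /z /=; ring.
  have HU5 : \sum_(i<N) \sum_(j<N) lam i * lam j * C i j = 2 * B.
    rewrite (@split_sum R N (fun i j => lam i * lam j * C i j)).
    rewrite [\sum_(i < N) lam i * lam i * C i i]big1 ?addr0; last first.
      move=> i _; rewrite /C /tcost big1 ?mulr0 // => k _; rewrite big1 // => l _.
      by rewrite Hii; case: eqP => [->|_]; rewrite ?sqdist_xx ?mulr0 ?mul0r.
    have E : forall i j : 'I_N, (i < j)%N -> C i j = W2sq (mu i) (x i) (mu j) (x j).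
      by move=> i j h; exact: (Hopt i j h).2.
    have Es : forall i j : 'I_N, (i < j)%N -> C j i = C i j.
      move=> i j h; rewrite /C /tcost exchange_big; apply: eq_bigr => k _.
      by apply: eq_bigr => l _; rewrite Hsym // sqdistC.
    have -> : 2 * B = B + B by ring.
    rewrite /B; congr (_ + _); apply: eq_bigr => i _; apply: eq_bigr => j h.
      by rewrite E.
    by rewrite Es // E // [lam j * _]mulrC.
  have HU6 : \sum_(i<N) lam i * \sum_(k < n i) \sum_q c i k q * sqdist (m i k) (z q) =
      \sum_(i<N) lam i * \sum_(k < n i) \sum_q c i k q * sqdist (x i k) (z q) - A.
    rewrite /A -sumrB; apply: eq_bigr => i _; rewrite -mulrBr -sumrB.
    by congr (_ * _); apply: eq_bigr => k _; exact: HU3.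
  by rewrite -HU5 -HU4 -HU6 -HU2.
have HL : B <= Q.
  apply/ler_addgt0Pr => e e0.
  case: Hnu_prob => nu0 nu1.
  have ex : forall i, exists g : J -> 'I_(n i) -> R, is_coupling nuw (mu i) g /\
      tcost nux (x i) g <= W2sq nuw nux (mu i) (x i) + e.
    move=> i; apply: (W2sq_approx nux (x i) (g := fun y k => nuw y * mu i k)) => //.
    split; [|split].
    - by move=> y k; rewrite mulr_ge0 // ltW.
    - by move=> y; rewrite -big_distrr /= (Hmu i).2 mulr1.
    - by move=> k; rewrite -big_distrl /= nu1 mul1r.
  pose gam i := proj1_sig (cid (ex i)).
  have gamP : forall i, is_coupling nuw (mu i) (gam i) /\
      tcost nux (x i) (gam i) <= W2sq nuw nux (mu i) (x i) + e.
    by move=> i; apply: (proj2_sig (cid (ex i))).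
  apply: le_trans (@glue_bound R d N n lam mu x J nuw nux gam l0 Hl1 (fun i => (gamP i).1)) _.
  have -> : Q + e = \sum_i lam i * (W2sq nuw nux (mu i) (x i) + e).
    transitivity (\sum_i (lam i * W2sq nuw nux (mu i) (x i) + lam i * e));
      last by apply: eq_bigr => i _; rewrite mulrDr.
    by rewrite big_split /= -big_distrl /= Hl1 mul1r.
  apply: ler_sum => i _; rewrite ler_wpM2l //; exact: (gamP i).2.
have [Bz|Bnz] := eqVneq B 0.
  rewrite Bz invr0 mulr0 subr0.
  have Pz : P = 0 by apply/eqP; rewrite eq_le P0 andbT; move: HU; rewrite Bz; lra.
  by rewrite Pz mul0r.
have Bp : 0 < B by rewrite lt_neqAle eq_sym Bnz B0.
have Qp : 0 < Q by apply: lt_le_trans HL.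
have -> : 2 - A / B = (2 * B - A) / B by field.
apply: (@le_trans _ _ (P / B)).
  by rewrite ler_wpM2l // lef_pV2 // posrE.
by rewrite ler_pM2r ?invr_gt0.
Qed.
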